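(* Let $t$ and $s$ be terms in the language of strong quasi-MV* algebras. Then $\mathbf{S^*}\models t\approx s$ if and only if $\mathbf{D^*}\models t\approx s$.
   Context: Terms in the language of strong quasi-MV* algebras are built from variables and constants $0,1$ using a binary operation $\oplus$ and unary operations $-,{}^+,{}^-$; $\mathbf{A}\models t\approx s$ means $t$ and $s$ take equal values under every assignment of variables in $\mathbf{A}$. $\mathbf{S^*}$ is the algebra with universe $S^*=[-1,1]\times[-1,1]\subseteq\mathbb{R}^2$ and operations $\langle a,b\rangle\oplus\langle c,d\rangle=\langle\max\{-1,\min\{1,a+c\}\},0\rangle$, $-\langle a,b\rangle=\langle -a,-b\rangle$, $\langle a,b\rangle^+=\langle\max\{0,a\},0\rangle$, $\langle a,b\rangle^-=\langle\min\{0,a\},0\rangle$, $0=\langle 0,0\rangle$, $1=\langle 1,0\rangle$. $\mathbf{D^*}$ is the subalgebra of $\mathbf{S^*}$ with universe $D^*=\{\langle a,b\rangle\in\mathbb{R}^2:a^2+b^2\le 1\}$. *)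

(* Defs.v *)
From Stdlib Require Import Reals.
Open Scope R_scope.

Inductive term : Type :=
| Var : nat -> term
| Zero : term
| One : term
| Oplus : term -> term -> term
| Neg : term -> term
| Pos : term -> term
| NegPart : term -> term.

(* Operations of S* on pairs of reals (D* is a subalgebra, same operations). *)
Definition clamp (x : R) : R := Rmax (-1) (Rmin 1 x).

Definition s_oplus (p q : R * R) : R * R := (clamp (fst p + fst q), 0).
Definition s_neg (p : R * R) : R * R := (- fst p, - snd p).
Definition s_pos (p : R * R) : R * R := (Rmax 0 (fst p), 0).
Definition s_negpart (p : R * R) : R * R := (Rmin 0 (fst p), 0).
Definition s_zero : R * R := (0, 0).
Definition s_one : R * R := (1, 0).

Fixpoint eval (v : nat -> R * R) (t : term) : R * R :=
  match t with
  | Var n => v n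
  | Zero => s_zero
  | One => s_one
  | Oplus a b => s_oplus (eval v a) (eval v b)
  | Neg a => s_neg (eval v a)
  | Pos a => s_pos (eval v a)
  | NegPart a => s_negpart (eval v a)
  end.

Definition in_S (p : R * R) : Prop :=
  -1 <= fst p <= 1 /\ -1 <= snd p <= 1.
Definition in_D (p : R * R) : Prop :=
  fst p ^ 2 + snd p ^ 2 <= 1.

Definition models_S (t s : term) : Prop :=
  forall v : nat -> R * R, (forall n, in_S (v n)) -> eval v t = eval v s.
Definition models_D (t s : term) : Prop :=
  forall v : nat -> R * R, (forall n, in_D (v n)) -> eval v t = eval v s.

(* Main.v *)
Require Import Defs.
From Stdlib Require Import Reals Lra.
Open Scope R_scope.

Lemma fst_dep (v w : nat -> R * R) (t : term) :
  (forall n, fst (v n) = fst (w n)) -> fst (eval v t) = fst (eval w t).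
Proof.
  intro H; induction t; simpl; auto;
  unfold s_oplus, s_neg, s_pos, s_negpart; simpl; congruence.
Qed.

Lemma snd_dep (v w : nat -> R * R) (t : term) :
  (forall n, snd (v n) = snd (w n)) -> snd (eval v t) = snd (eval w t).
Proof.
  intro H; induction t; simpl; auto;
  unfold s_oplus, s_neg, s_pos, s_negpart; simpl; congruence.
Qed.

Theorem proposition3p3 (t s : term) : models_S t s <-> models_D t s.
Proof.
  split.
  - intros HS v Hv. apply HS. intro n. specialize (Hv n). unfold in_D in Hv.
    unfold in_S. destruct (v n) as [a b]; simpl in *.
    assert (a*a <= 1) by nra. assert (b*b <= 1) by nra.
    split; split; nra.
  - intros HD v Hv.
    set (w1 := fun n => (fst (v n), 0)).
    set (w2 := fun n => (0, snd (v n))).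
    assert (H1 : eval w1 t = eval w1 s).
    { apply HD. intro n. specialize (Hv n). unfold in_S in Hv. unfold in_D, w1; simpl.
      destruct Hv as [[? ?] _]. nra. }
    assert (H2 : eval w2 t = eval w2 s).
    { apply HD. intro n. specialize (Hv n). unfold in_S in Hv. unfold in_D, w2; simpl.
      destruct Hv as [_ [? ?]]. nra. }
    assert (F : forall u, fst (eval v u) = fst (eval w1 u)).
    { intro u. apply fst_dep. intro n; reflexivity. }
    assert (S : forall u, snd (eval v u) = snd (eval w2 u)).
    { intro u. apply snd_dep. intro n; reflexivity. }
    destruct (eval v t) as [a b] eqn:Et. destruct (eval v s) as [c d] eqn:Es.
    pose proof (F t) as Ft. pose proof (F s) as Fs. pose proof (S t) as St. pose proof (S s) as Ss.
    rewrite Et in Ft, St. rewrite Es in Fs, Ss. simpl in *.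
    rewrite Ft, Fs, St, Ss, H1, H2. reflexivity.
Qed.
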